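(* Let $0<q<1$, and for each integer $k\ge1$ let $a=a(k)>0$ (a positive, bounded function of $k$). Define \[u_n=\frac{(k+ak^{-1})^n}{n!}\,q^{-n(2k-n-1)/2}\ (n\ge0),\qquad v_j=u_{2k-j-1}-u_j\ (0\le j\le k-1).\] Then for every integer $k\ge1$, $v_j>0$ for all $0\le j\le k-1$. Furthermore, if $a=a_0+O(k^{-1})$ as $k\to\infty$ for some constant $a_0>0$, then there exists a positive integer $N(q)$ such that for every $N\ge N(q)$ and every $k\ge q^{-3N}$, one has $v_j<v_{j+1}$ for all $0\le j\le k-N$. *)

(* Defs.v *)
From mathcomp Require Import all_boot all_order all_algebra.
From mathcomp Require Import reals.
Set Implicit Arguments. Unset Strict Implicit. Unset Printing Implicit Defensive.
Import Order.TTheory GRing.Theory Num.Theory.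
Local Open Scope ring_scope.

(* Exponent n(2k-n-1)/2 as an integer (n(2k-n-1) is always even). *)
Definition uexp (k n : nat) : int :=
  divz (n%:Z * (2 * k%:Z - n%:Z - 1)) 2.

Definition u (R : realType) (q : R) (a : nat -> R) (k n : nat) : R :=
  (k%:R + a k / k%:R) ^+ n / (n`!)%:R * q ^ (- uexp k n).

Definition v (R : realType) (q : R) (a : nat -> R) (k j : nat) : R :=
  u q a k (2 * k - j - 1)%N - u q a k j.

(* Main.v *)
Require Import Defs.
From mathcomp Require Import all_boot all_order all_algebra.
From mathcomp Require Import reals.
From mathcomp Require Import lra zify ring.
Set Implicit Arguments. Unset Strict Implicit.
Import Order.TTheory GRing.Theory Num.Theory.
Local Open Scope ring_scope.
Definition BB (R : realType) (x : R) (n : nat) : R := x ^+ n / (n`!)%:R.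

Lemma BB_S (R : realType) (x : R) n : BB x n.+1 * (n.+1)%:R = BB x n * x.
Proof.
rewrite /BB factS natrM exprS.
have h1 : (n.+1)%:R != 0 :> R by rewrite pnatr_eq0.
have h2 : (n`!)%:R != 0 :> R by rewrite pnatr_eq0 -lt0n fact_gt0.
field; by rewrite h2 nat1r h1.
Qed.

Lemma BB_gt0 (R : realType) (x : R) n : 0 < x -> 0 < BB x n.
Proof. by move=> hx; rewrite /BB divr_gt0 ?exprn_gt0 // ltr0n fact_gt0. Qed.

Lemma BB_L (R : realType) (x : R) (k : nat) : (k%:R <= x) ->
  forall d i, (i + d + 1 = k)%N -> x * BB x i <= k%:R * BB x (i + 2 * d + 1).
Proof.
move=> hkx; elim=> [|d IH] i hid.
  have -> : (i + 2 * 0 + 1 = i.+1)%N by lia.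
  have hk : k%:R = (i.+1)%:R :> R by rewrite -hid addn0 addn1.
  by rewrite hk [_%:R * _]mulrC BB_S mulrC.
have := IH i.+1 ltac:(lia).
have -> : (i.+1 + 2 * d + 1 = (i + 2 * d.+1).+1 - 1 + 0)%N by lia.
rewrite addn0.
have e1 : ((i + 2 * d.+1).+1 - 1 = i + 2 * d + 2)%N by lia.
rewrite e1 => IH'.
have e2 : (i + 2 * d.+1 + 1 = (i + 2 * d + 2).+1)%N by lia.
rewrite e2.
have S1 := BB_S x i. have S2 := BB_S x (i + 2 * d + 2).
set b0 := BB x i in S1 *. set b1 := BB x i.+1 in S1 IH' *.
set c2 := BB x (i + 2 * d + 2) in S2 IH' *. set c3 := BB x (i + 2 * d + 2).+1 in S2 *.
have hx : 0 < x by apply: lt_le_trans hkx; rewrite ltr0n; lia.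
have b0p : 0 < b0 by apply: BB_gt0. have b1p : 0 < b1 by apply: BB_gt0.
have hprod : ((i.+1)%:R * ((i + 2 * d + 2).+1)%:R : R) <= x ^+ 2.
  have -> : ((i.+1)%:R * ((i + 2 * d + 2).+1)%:R : R) = (k ^ 2 - (d.+1) ^ 2)%N%:R.
    rewrite -natrM; congr (_%:R); nia.
  apply: le_trans (_ : (k ^ 2)%N%:R <= _).
    by rewrite ler_nat leq_subr.
  by rewrite natrX lerXn2r // nnegrE ?ler0n // ltW.
set P := ((i + 2 * d + 2).+1)%:R in S2 hprod *.
set I1 := (i.+1)%:R in S1 hprod *.
have Pp : 0 < P by rewrite ltr0n.
rewrite -(ler_pM2r Pp).
have hA : x * b0 * P = b1 * (I1 * P) by rewrite mulrA S1; ring.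
have hB : b1 * (I1 * P) <= b1 * x ^+ 2 by rewrite ler_pM2l.
have hC : b1 * x ^+ 2 = x * (x * b1) by ring.
have hD : x * (x * b1) <= x * (k%:R * c2) by rewrite ler_pM2l.
have hE : x * (k%:R * c2) = k%:R * c3 * P by rewrite -mulrA S2; ring.
rewrite hA -hE; apply: le_trans hB _; by rewrite hC.
Qed.
Lemma bern (R : realType) (h : R) m : 0 <= h -> 1 + m%:R * h <= (1 + h) ^+ m.
Proof.
move=> h0; elim: m => [|m IH]; first by rewrite mul0r addr0 expr0.
rewrite exprSr -natr1.
have hm : 0 <= m%:R * h by rewrite mulr_ge0.
apply: le_trans (_ : (1 + m%:R * h) * (1 + h) <= _); last first.
  by rewrite ler_pM2r ?IH //; lra.
have : 0 <= m%:R * h * h by rewrite mulr_ge0.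
lra.
Qed.

Lemma exp_beats (R : realType) (Q D : R) : 1 < Q -> 0 <= D ->
  exists n0 : nat, forall n, (n0 <= n)%N -> D * (n.+1)%:R ^+ 2 < Q ^+ n.
Proof.
move=> hQ hD.
set h := Q - 1.
have hp : 0 < h by rewrite /h; lra.
set g := h / (1 + h).
have gp : 0 < g by rewrite /g divr_gt0 //; lra.
have g1 : g <= 1 by rewrite /g ler_pdivrMr; lra.
have gh : g <= h by rewrite /g ler_pdivrMr; nra.
set b := Num.Def.archi_bound (9 * D / g ^+ 3).
have hb := @archi_boundP _ (9 * D / g ^+ 3) ltac:(by rewrite divr_ge0 // ?exprn_ge0 //; lra).
exists (3 * b)%N => n hn.
set m := (n %/ 3)%N.
have hm : (b <= m)%N by rewrite /m; rewrite leq_divRL //; lia.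
have hnm : (3 * m <= n)%N by rewrite /m; have := divn_eq n 3; lia.
have hnm2 : (n.+1 <= 3 * m.+1)%N by rewrite /m; have := divn_eq n 3; have := ltn_pmod n (isT : (0 < 3)%N); lia.
clearbody m.
have Q1 : 1 <= Q by lra.
have e1 : Q ^+ (3 * m) <= Q ^+ n by apply: ler_weXn2l.
have e2 : (1 + m%:R * h) ^+ 3 <= Q ^+ (3 * m).
  rewrite mulnC exprM; apply: lerXn2r; rewrite ?nnegrE.
  - by apply: addr_ge0 => //; rewrite mulr_ge0 // ltW.
  - by apply: exprn_ge0; lra.
  - by have := bern m (ltW hp); rewrite /h; have -> : 1 + (Q - 1) = Q by ring.
have e3 : (m.+1)%:R * g <= 1 + m%:R * h.
  rewrite -natr1 mulrDl mul1r.
  have : m%:R * g <= m%:R * h by rewrite ler_wpM2l.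
  lra.
have e4 : ((m.+1)%:R * g) ^+ 3 <= (1 + m%:R * h) ^+ 3.
  apply: lerXn2r; rewrite ?nnegrE //.
  - by rewrite mulr_ge0 // ltW.
  - by apply: addr_ge0 => //; rewrite mulr_ge0 // ltW.
have e5 : D * (n.+1)%:R ^+ 2 <= D * (9 * (m.+1)%:R ^+ 2).
  apply: ler_wpM2l => //.
  have -> : 9 * (m.+1)%:R ^+ 2 = (3 * m.+1)%N%:R ^+ 2 :> R by rewrite natrM; ring.
  apply: lerXn2r; rewrite ?nnegrE ?ler0n //.
  by rewrite ler_nat; exact: hnm2.
have e6 : 9 * D / g ^+ 3 < (m.+1)%:R.
  apply: lt_le_trans hb _; rewrite ler_nat; exact: leqW hm.
have e7 : D * (9 * (m.+1)%:R ^+ 2) < ((m.+1)%:R * g) ^+ 3.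
  have g3 : 0 < g ^+ 3 by rewrite exprn_gt0.
  rewrite ltr_pdivrMr // in e6.
  have mp : 0 < (m.+1)%:R ^+ 2 :> R by rewrite exprn_gt0 // ltr0n.
  have -> : ((m.+1)%:R * g) ^+ 3 = (m.+1)%:R * g ^+ 3 * (m.+1)%:R ^+ 2 :> R by ring.
  have -> : D * (9 * (m.+1)%:R ^+ 2) = 9 * D * (m.+1)%:R ^+ 2 by ring.
  by rewrite ltr_pM2r.
apply: le_lt_trans e5 _; apply: lt_le_trans e7 _.
apply: le_trans e4 _; apply: le_trans e2 _; exact: e1.
Qed.

Lemma uexp_sym k j : (j < k)%N -> uexp k (2 * k - j - 1) = uexp k j.
Proof.
move=> hj; rewrite /uexp; congr (divz _ 2).
have -> : ((2 * k - j - 1)%N)%:Z = 2 * k%:Z - j%:Z - 1 by lia.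
ring.
Qed.

Lemma uexp_S k j : (j < k)%N -> uexp k j.+1 = uexp k j + (k - j - 1)%N.
Proof.
move=> hj; rewrite /uexp.
have -> : ((k - j - 1)%N)%:Z = (k%:Z - j%:Z - 1) by lia.
transitivity (divz ((k%:Z - j%:Z - 1) * 2 + j%:Z * (2 * k%:Z - j%:Z - 1)) 2).
  congr (divz _ 2).
  have -> : (j.+1)%:Z = j%:Z + 1 by lia.
  ring.
by rewrite divzMDl // addrC.
Qed.
Lemma core2 (R : realType) (x kk a s b1 c1 c0 b0 al c QS : R) :
  1 <= kk -> x = kk + a / kk -> 0 < a -> a <= kk -> 0 < al -> al <= a ->
  2 <= s -> s <= kk -> 0 < b1 ->
  x * b1 <= kk * c1 ->
  c0 * (kk + s - 1) = c1 * x ->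
  b1 * (kk - s + 1) = b0 * x ->
  x ^+ 2 - kk ^+ 2 <= c ->
  1 + (c + s ^+ 2) / al < QS ->
  c0 - b0 < QS * (c1 - b1).
Proof.
move=> hk hx ha hak hal hala hs hsk hb1 hL hc0 hb0 hc hQ.
have kp : 0 < kk by lra.
have akp : 0 < a / kk by rewrite divr_gt0.
have ak1 : a / kk <= 1 by rewrite ler_pdivrMr //; lra.
set T := kk + s - 1.
have xk : kk < x by lra.
have xT : x <= T by rewrite /T; lra.
have Tp : 0 < T by rewrite /T; lra.
have xp : 0 < x by lra.
set E := c1 - b1.
have hE : a * b1 <= kk ^+ 2 * E.
  have : kk * E >= (x - kk) * b1 by rewrite /E; lra.
  rewrite hx (_ : kk + a / kk - kk = a / kk); last by ring.
  move=> h; have := ler_wpM2l (ltW kp) h.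
  have -> : kk * (a / kk * b1) = a * b1 by field; lra.
  by rewrite mulrA expr2.
have Ep : 0 < E.
  have : 0 < a * b1 by rewrite mulr_gt0.
  move=> h; have h2 : 0 < kk ^+ 2 * E by lra.
  by rewrite pmulr_rgt0 ?exprn_gt0 in h2.
have xTk : kk ^+ 2 <= x * T by rewrite expr2; apply: ler_pM; lra.
have key : (c0 - b0) * (x * T) = E * x ^+ 2 + b1 * (x ^+ 2 - kk ^+ 2 + (s - 1) ^+ 2).
  have -> : (c0 - b0) * (x * T) = (c0 * T) * x - (b0 * x) * T by ring.
  rewrite /T hc0 -hb0 /E; ring.
have s2 : x ^+ 2 - kk ^+ 2 + (s - 1) ^+ 2 <= c + s ^+ 2.
  have : (s - 1) ^+ 2 <= s ^+ 2 by rewrite lerXn2r ?nnegrE; lra.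
  lra.
have c0' : 0 <= x ^+ 2 - kk ^+ 2 + (s - 1) ^+ 2.
  have : kk ^+ 2 <= x ^+ 2 by rewrite lerXn2r ?nnegrE; lra.
  have : 0 <= (s - 1) ^+ 2 by rewrite sqr_ge0.
  lra.
have cs : 0 <= c + s ^+ 2 by lra.
have t1 : b1 * (x ^+ 2 - kk ^+ 2 + (s - 1) ^+ 2) <= b1 * (c + s ^+ 2) by rewrite ler_pM2l.
have t2 : b1 * (c + s ^+ 2) <= kk ^+ 2 * E * ((c + s ^+ 2) / al).
  rewrite mulrA ler_pdivlMr // .
  have : b1 * al <= b1 * a by rewrite ler_pM2l.
  move=> h.
  have := ler_wpM2r cs hE.
  have := ler_wpM2r cs h.
  move=> h1 h2.
  apply: le_trans (_ : a * b1 * (c + s ^+ 2) <= _); last exact: h2.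
  have -> : b1 * (c + s ^+ 2) * al = b1 * al * (c + s ^+ 2) by ring.
  by rewrite (mulrC a).
have t3 : kk ^+ 2 * E * ((c + s ^+ 2) / al) < kk ^+ 2 * E * (QS - 1).
  rewrite ltr_pM2l ?mulr_gt0 ?exprn_gt0 //; lra.
have t4 : kk ^+ 2 * E * (QS - 1) <= x * T * E * (QS - 1).
  have : 0 < QS - 1.
    have : 0 <= (c + s ^+ 2) / al by rewrite divr_ge0 // ltW.
    lra.
  move=> q1; rewrite ler_pM2r // ler_pM2r //.
have t5 : E * x ^+ 2 <= E * (x * T).
  by rewrite ler_pM2l // expr2 ler_pM2l.
rewrite -(ltr_pM2r (mulr_gt0 xp Tp)) key.
have -> : QS * E * (x * T) = E * (x * T) + x * T * E * (QS - 1) by ring.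
lra.
Qed.

Lemma u_BB (R : realType) (q : R) (a : nat -> R) k n :
  u q a k n = BB (k%:R + a k / k%:R) n * q ^ (- uexp k n).
Proof. by []. Qed.

Lemma v_eq (R : realType) (q : R) (a : nat -> R) k j : (j < k)%N ->
  v q a k j = q ^ (- uexp k j) *
     (BB (k%:R + a k / k%:R) (2 * k - j - 1) - BB (k%:R + a k / k%:R) j).
Proof. by move=> hj; rewrite /v !u_BB uexp_sym //; ring. Qed.

Unset Implicit Arguments.

Theorem lemma2p1 (R : realType) (q : R) (a : nat -> R) :
  0 < q < 1 ->
  (forall k : nat, (0 < k)%N -> 0 < a k) ->
  (exists M : R, forall k : nat, (0 < k)%N -> a k <= M) ->
  (forall k : nat, (0 < k)%N -> forall j : nat, (j <= k - 1)%N -> 0 < v q a k j) /\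
  (forall a0 : R, 0 < a0 ->
     (exists (C : R) (K : nat), forall k : nat, (K <= k)%N -> (0 < k)%N ->
        `|a k - a0| <= C / k%:R) ->
     exists N0 : nat, (0 < N0)%N /\
       forall N k : nat, (N0 <= N)%N -> q ^- (3 * N) <= k%:R ->
         forall j : nat, (j + N <= k)%N -> v q a k j < v q a k j.+1).
Proof.
move=> /andP[q0 q1] hapos [M hM].
split.
  move=> k k0 j hj.
  have hjk : (j < k)%N by lia.
  rewrite v_eq // mulr_gt0 ?exprz_gt0 // subr_gt0.
  set x := k%:R + a k / k%:R.
  have kp : 0 < k%:R :> R by rewrite ltr0n.
  have xk : k%:R < x by rewrite /x ltrDl divr_gt0 // hapos.
  have hL := BB_L (ltW xk) (d := (k - 1 - j)%N) (i := j) ltac:(lia).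
  have -> : (2 * k - j - 1 = j + 2 * (k - 1 - j) + 1)%N by lia.
  have b0 : 0 < BB x j by apply: BB_gt0; exact: lt_trans kp xk.
  rewrite -(ltr_pM2l kp); apply: lt_le_trans hL.
  by rewrite ltr_pM2r.
move=> a0 a0p [C [K hC]].
have Mp : 0 < M by apply: lt_le_trans (hapos 1%N isT) (hM 1%N isT).
set al := a0 / 2.
have alp : 0 < al by rewrite /al; lra.
set K1 := maxn (maxn K 1) (Num.Def.archi_bound (2 * `|C| / a0)).
have hK1 : forall k, (K1 <= k)%N -> al <= a k.
  move=> k hk.
  have k0 : (0 < k)%N by move: hk; rewrite /K1; lia.
  have kK : (K <= k)%N by move: hk; rewrite /K1; lia.
  have hb := @archi_boundP _ (2 * `|C| / a0) ltac:(by rewrite divr_ge0 // ?mulr_ge0 //; lra).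
  have hb2 : 2 * `|C| / a0 < k%:R.
    apply: lt_le_trans hb _; rewrite ler_nat; move: hk; rewrite /K1; lia.
  have kp : 0 < k%:R :> R by rewrite ltr0n.
  have h1 := hC k kK k0.
  have h2 : C / k%:R <= `|C| / k%:R by rewrite ler_pM2r ?invr_gt0 // ler_norm.
  have h3 : `|C| / k%:R <= a0 / 2.
    rewrite ler_pdivrMr // mulrC mulrA ler_pdivlMr //.
    rewrite ltr_pdivrMr // in hb2; rewrite [_ * 2]mulrC; exact: ltW hb2.
  have h5 : a0 - a k <= `|a k - a0| by rewrite distrC ler_norm.
  have h6 := le_trans h5 (le_trans h1 (le_trans h2 h3)).
  clear -h6; rewrite /al; lra.
set c := 2 * M + M ^+ 2.
have cp : 0 <= c by rewrite /c; have := sqr_ge0 M; lra.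
set Q := q^-1.
have Q1 : 1 < Q by rewrite /Q invf_gt1.
set D := 1 + (c + 1) / al.
have Dp : 0 <= D.
  have : 0 <= (c + 1) / al by rewrite divr_ge0 //; lra.
  rewrite /D; lra.
have [n0 hn0] := exp_beats Q1 Dp.
have hNB := @archi_boundP _ M (ltW Mp).
set NB := Num.Def.archi_bound M in hNB *.
exists (maxn (maxn 2 K1) (maxn NB n0.+1)); split; first by lia.
move=> N k hN hq3 j hjN; clear hq3.
clearbody NB K1.
have hN2 := hN; rewrite !geq_max in hN2.
have hs2 : (2 <= k - j)%N by clear -hN2 hjN; lia.
have hsn0 : (n0 <= k - j - 1)%N by clear -hN2 hjN; lia.
have hkK : (K1 <= k)%N by clear -hN2 hjN; lia.
have hkNB : (NB <= k)%N by clear -hN2 hjN; lia.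
have k0 : (0 < k)%N by clear -hN2 hjN; lia.
have hjk : (j < k)%N by clear -hN2 hjN; lia.
have hj1k : (j.+1 < k)%N by clear -hN2 hjN; lia.
have n1 : (k - j <= k)%N by clear -hjk hs2; lia.
have n2 : (j.+1 + (k - j - 2) + 1 = k)%N by clear -hjk hs2; lia.
have n3 : (j.+1 + 2 * (k - j - 2) + 1 = 2 * k - j.+1 - 1)%N by clear -hjk hs2; lia.
have n4 : (2 * k - j - 1 = (2 * k - j.+1 - 1).+1)%N by clear -hjk hs2; lia.
have n5 : ((2 * k - j.+1 - 1).+1 + 1 = k + (k - j))%N by clear -hjk hs2; lia.
have n6 : (j.+1 + (k - j) = k + 1)%N by clear -hjk hs2; lia.
have n7 : (k - j - 1).+1 = (k - j)%N by clear -hjk hs2; lia.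
set s := (k - j)%N.
rewrite v_eq // v_eq //.
rewrite (uexp_S hjk) opprD expfzDr ?gt_eqF // -mulrA ltr_pM2l ?exprz_gt0 //.
rewrite -exprnN -exprVn -/Q.
set x := k%:R + a k / k%:R.
have kp : 0 < k%:R :> R by rewrite ltr0n.
have ak := hapos k k0.
have xk : k%:R < x by rewrite /x ltrDl divr_gt0.
have xp : 0 < x by apply: lt_trans kp xk.
apply: (@core2 R x k%:R (a k) s%:R _ _ _ _ al c) => //.
- by rewrite ler1n.
- apply: le_trans (hM k k0) _; apply: ltW; apply: lt_le_trans hNB _; by rewrite ler_nat.
- exact: hK1.
- by rewrite ler_nat.
- by rewrite ler_nat.
- exact: BB_gt0.
- have := BB_L (ltW xk) (d := (k - j - 2)%N) (i := j.+1) n2.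
  by rewrite n3.
- rewrite n4 -BB_S; congr (_ * _).
  have := congr1 (fun n => n%:R : R) n5; rewrite /= !natrD; lra.
- have e : (k%:R - s%:R + 1 : R) = (j.+1)%:R.
    have := congr1 (fun n => n%:R : R) n6; rewrite /= !natrD; lra.
  by rewrite e BB_S.
- have hak : a k <= M by exact: hM.
  have kk1 : 1 <= k%:R :> R by rewrite ler1n.
  have y1 : a k / k%:R <= a k by rewrite ler_pdivrMr //; nra.
  have y0 : 0 < a k / k%:R by rewrite divr_gt0.
  have -> : x ^+ 2 - k%:R ^+ 2 = 2 * a k + (a k / k%:R) ^+ 2.
    rewrite /x; field; lra.
  have : (a k / k%:R) ^+ 2 <= M ^+ 2 by rewrite lerXn2r ?nnegrE; lra.
  rewrite /c; lra.
- have hn := hn0 _ hsn0.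
  rewrite n7 in hn; apply: le_lt_trans hn.
  have s1 : 1 <= s%:R ^+ 2 :> R.
    have s0 : (0 < s)%N by apply: leq_trans _ hs2.
    by rewrite -natrX ler1n expn_gt0 s0.
  have h7 : (c + s%:R ^+ 2) / al <= (c + 1) / al * s%:R ^+ 2.
    rewrite mulrAC ler_pM2r ?invr_gt0 //; nra.
  have -> : D * s%:R ^+ 2 = s%:R ^+ 2 + (c + 1) / al * s%:R ^+ 2 by rewrite /D; ring.
  lra.
Qed.
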